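(* Let $n\ge 2$, $m\ge 1$, let $V=\{v_1,\dots,v_m\}\subset H$ be data points, where $H=\{x\in\mathbb{R}^n : x_1+\cdots+x_n=0\}$ is identified with the tropical projective torus $\mathbb{R}^n/\mathbb{R}\mathbf{1}_n$. Let $w_1,\dots,w_m$ be any positive real weights. Then the weighted Fermat–Weber set $$\mathrm{FW}(V,w)=\operatorname{argmin}_{x\in H}\sum_{i=1}^m w_i\, d_\Delta(x,v_i)$$ is contained in the min-tropical convex hull $\mathrm{tconv}(V)$. More precisely, $\mathrm{FW}(V,w)$ is a covector cell of $\mathrm{tconv}(V)$. Furthermore, for every covector cell $P$ of $\mathrm{tconv}(V)$ there exist positive real weights $w_1,\dots,w_m$ such that $\mathrm{FW}(V,w)=P$.
   Context: $\mathbf{1}_n$ is the all-ones vector in $\mathbb{R}^n$; every class in $\mathbb{R}^n/\mathbb{R}\mathbf{1}_n$ has a unique representative in $H$, and points are given by these representatives. Write $v_i=(v_{i1},\dots,v_{in})$. The asymmetric tropical distance is, for $x,y\in H$, $d_\Delta(x,y)=n\max_{j\in[n]}(x_j-y_j)$ (for arbitrary representatives in $\mathbb{R}^n$ it is $n\max_j(x_j-y_j)+\sum_j(y_j-x_j)$). The min-tropical convex hull is $\mathrm{tconv}(V)=\{\min(\lambda_1\mathbf{1}_n+v_1,\dots,\lambda_m\mathbf{1}_n+v_m) : \lambda\in\mathbb{R}^m\}$ (coordinatewise minimum), taken modulo $\mathbb{R}\mathbf{1}_n$ and represented in $H$. Covector decomposition: for $x\in H$ and $i\in[m]$ let $S_i(x)=\{j\in[n]: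 x_j-v_{ij}=\max_{k}(x_k-v_{ik})\}$. For a tuple $S=(S_1,\dots,S_m)$ of nonempty subsets of $[n]$ put $C_S=\{x\in H : S_i\subseteq S_i(x)\text{ for all } i\}$. The nonempty sets $C_S$ are closed polyhedra forming a polyhedral complex (the covector decomposition of $H$ induced by $V$, i.e. the subdivision induced by the max-tropical hyperplanes centered at $v_1,\dots,v_m$); its cells are called covector cells. The covector cells of $\mathrm{tconv}(V)$ are the bounded covector cells; their union is $\mathrm{tconv}(V)$. *)

(* Defs.v *)
From HB Require Import structures.
From mathcomp Require Import all_boot all_order all_algebra.
From mathcomp Require Import reals.
Set Implicit Arguments. Unset Strict Implicit. Unset Printing Implicit Defensive.
Import Order.TTheory GRing.Theory Num.Theory.
Local Open Scope ring_scope.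

Section Trop.
Variable R : realType.

(* maximum / minimum of the finitely many values f j, j in [n]
   (seeded with the first value, so it is the true max/min when n > 0) *)
Definition vmax (n : nat) (f : 'I_n -> R) : R :=
  \big[Num.max/head 0 (map f (enum 'I_n))]_(j < n) f j.
Definition vmin (n : nat) (f : 'I_n -> R) : R :=
  \big[Num.min/head 0 (map f (enum 'I_n))]_(j < n) f j.

Definition inH (n : nat) (x : 'I_n -> R) : Prop := \sum_(j < n) x j = 0.

(* asymmetric tropical distance (formula valid for arbitrary representatives;
   for x, y in H it equals n * max_j (x_j - y_j)) *)
Definition dDelta (n : nat) (x y : 'I_n -> R) : R :=
  n%:R * vmax (fun j => x j - y j) + \sum_(j < n) (y j - x j).

Definition FWobj (n m : nat) (v : 'I_m -> 'I_n -> R) (w : 'I_m -> R)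
  (x : 'I_n -> R) : R := \sum_(i < m) w i * dDelta x (v i).
Definition FW (n m : nat) (v : 'I_m -> 'I_n -> R) (w : 'I_m -> R)
  (x : 'I_n -> R) : Prop :=
  inH x /\ forall y, inH y -> FWobj v w x <= FWobj v w y.

(* min-tropical convex hull, taken modulo R1 and represented in H:
   x in H is in tconv(V) iff x = c 1 + min_i (lambda_i 1 + v_i) for some
   lambda in R^m and c in R. *)
Definition tconv (n m : nat) (v : 'I_m -> 'I_n -> R) (x : 'I_n -> R) : Prop :=
  inH x /\ exists (lam : 'I_m -> R) (c : R),
    forall j, x j = c + vmin (fun i => lam i + v i j).

(* covector cell C_S for a tuple S = (S_1,...,S_m) of subsets of [n]:
   x in H with S_i contained in S_i(x) = argmax_j (x_j - v_ij) for all i. *)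
Definition Ccell (n m : nat) (v : 'I_m -> 'I_n -> R) (S : 'I_m -> {set 'I_n})
  (x : 'I_n -> R) : Prop :=
  inH x /\ forall i, forall j, j \in S i ->
    x j - v i j = vmax (fun k => x k - v i k).

(* S is a valid type (all S_i nonempty) and C_S is a (nonempty) covector cell
   which is bounded, i.e. a covector cell of tconv(V). *)
Definition is_bounded_cell (n m : nat) (v : 'I_m -> 'I_n -> R)
  (S : 'I_m -> {set 'I_n}) : Prop :=
  (forall i, S i != set0) /\
  (exists x, Ccell v S x) /\
  (exists B : R, forall x, Ccell v S x -> forall j, `|x j| <= B).

End Trop.

(* Main.v *)
Require Import Defs.
From HB Require Import structures.
From mathcomp Require Import all_boot all_order all_algebra.
From mathcomp Require Import reals.
From mathcomp Require Import ring lra.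
From Stdlib Require Import Classical.
Set Implicit Arguments. Unset Strict Implicit. Unset Printing Implicit Defensive.
Import Order.TTheory GRing.Theory Num.Theory.
Local Open Scope ring_scope.

Section Farkas.
Variable R : realType.

Lemma sum_ind (K : finType) (p : K) (F : K -> R) :
  \sum_k (k == p)%:R * F k = F p.
Proof.
rewrite (bigD1 p) //= eqxx mul1r big1 ?addr0 // => k /negbTE ->.
by rewrite mul0r.
Qed.

Lemma sep_exists (ls us : seq R) :
  (forall l u, l \in ls -> u \in us -> l <= u) ->
  exists s, (forall l, l \in ls -> l <= s) /\ (forall u, u \in us -> s <= u).
Proof.
elim: ls => [|l ls IH] H.
  clear H; elim: us => [|u us [s [_ Hs]]]; first by exists 0.
  exists (Num.min s u); split => // u'; rewrite inE => /orP [/eqP -> | Hu].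
    by rewrite ge_min lexx orbT.
  by rewrite ge_min Hs.
have [s [H1 H2]] : exists s, (forall l, l \in ls -> l <= s) /\ (forall u, u \in us -> s <= u).
  by apply: IH => l' u Hl Hu; apply: H => //; rewrite inE Hl orbT.
exists (Num.max s l); split.
  move=> l'; rewrite inE => /orP [/eqP -> | Hl]; first by rewrite le_max lexx orbT.
  by rewrite le_max H1.
move=> u Hu; rewrite ge_max H2 //=; apply: H => //; by rewrite inE eqxx.
Qed.

Lemma sum_last d (F : 'I_d.+1 -> R) :
  \sum_j F j = \sum_(j < d) F (lift ord_max j) + F ord_max.
Proof.
rewrite big_ord_recr /=; congr (_ + _); apply: eq_bigr => j _; congr F.
by apply: val_inj; have := lift_max j; rewrite /= => ->.
Qed.

Definition ext d (x : 'I_d -> R) (s : R) : 'I_d.+1 -> R :=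
  fun j => if unlift ord_max j is Some j' then x j' else s.

Lemma ext_lift d x s (j : 'I_d) : ext x s (lift ord_max j) = x j.
Proof. by rewrite /ext liftK. Qed.
Lemma ext_max d (x : 'I_d -> R) s : ext x s ord_max = s.
Proof. by rewrite /ext unlift_none. Qed.

Lemma farkas_ord d : forall (K : finType) (a : K -> 'I_d -> R) (b : K -> R),
  ~ (exists x : 'I_d -> R, forall k, \sum_j a k j * x j <= b k) ->
  exists l : K -> R, (forall k, 0 <= l k) /\
    (forall j, \sum_k l k * a k j = 0) /\ \sum_k l k * b k < 0.
Proof.
elim: d => [|d IH] K a b Hinf.
  case: (boolP [exists k, b k < 0]) => [/existsP [k hk] | /existsPn H].
    exists (fun k' => (k' == k)%:R); split; first by move=> k'; rewrite ler0n.
    split; first by case.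
    by rewrite sum_ind.
  exfalso; apply: Hinf; exists (fun _ => 0) => k; rewrite big_ord0.
  by move: (H k); rewrite -leNgt.
pose al k := a k ord_max.
pose ar k (j : 'I_d) := a k (lift ord_max j).
pose cond p q := (0 < al p) && (al q < 0).
pose coef (k' : K + (K * K)) (k0 : K) : R :=
  match k' with
  | inl k => if al k == 0 then (k0 == k)%:R else 0
  | inr (p, q) => if cond p q then (- al q) * (k0 == p)%:R + al p * (k0 == q)%:R else 0
  end.
pose a' k' j := \sum_k coef k' k * ar k j.
pose b' (k' : K + (K * K)) : R :=
  match k' with
  | inl k => if al k == 0 then b k else 1
  | inr (p, q) => if cond p q then (- al q) * b p + al p * b q else 1
  end.
have coef_dot : forall k' (F : K -> R), \sum_k coef k' k * F k =
   match k' with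
  | inl k => if al k == 0 then F k else 0
  | inr (p, q) => if cond p q then (- al q) * F p + al p * F q else 0
  end.
  move=> [k|[p q]] F /=.
    case: ifP => _; first by rewrite sum_ind.
    by rewrite big1 // => k0 _; rewrite mul0r.
  case: ifP => _; last by rewrite big1 // => k0 _; rewrite mul0r.
  rewrite (eq_bigr (fun k0 => (- al q) * ((k0 == p)%:R * F k0) + al p * ((k0 == q)%:R * F k0))).
    by rewrite big_split /= -!mulr_sumr !sum_ind.
  by move=> k0 _; rewrite mulrDl !mulrA.
have coef_ge0 : forall k' k, 0 <= coef k' k.
  move=> [k|[p q]] k0 /=.
    by case: ifP => // _; rewrite ler0n.
  case: ifP => // /andP [hp hq]; apply: addr_ge0; apply: mulr_ge0; rewrite ?ler0n //.
    by rewrite oppr_ge0 ltW.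
  by rewrite ltW.
have coef_al : forall k', \sum_k coef k' k * al k = 0.
  move=> k'; rewrite coef_dot; case: k' => [k|[p q]]; case: ifP => //.
    by move/eqP.
  by rewrite mulNr mulrC addNr.
have coef_b : forall k', \sum_k coef k' k * b k <= b' k'.
  by move=> k'; rewrite coef_dot; case: k' => [k|[p q]] /=; case: ifP => //; rewrite ler01.
have new_inf : ~ exists x', forall k', \sum_j a' k' j * x' j <= b' k'.
  case=> x' Hx.
  pose A k := \sum_j ar k j * x' j.
  have HA : forall k', \sum_j a' k' j * x' j = \sum_k coef k' k * A k.
    move=> k'; rewrite /a' /A.
    under eq_bigr => j _ do rewrite mulr_suml.
    rewrite exchange_big /=; apply: eq_bigr => k _; rewrite mulr_sumr.
    by apply: eq_bigr => j _; rewrite mulrA.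
  pose ls := [seq (b q - A q) / al q | q <- enum K & al q < 0].
  pose us := [seq (b p - A p) / al p | p <- enum K & 0 < al p].
  have Hsep : forall l u, l \in ls -> u \in us -> l <= u.
    move=> l u /mapP [q]; rewrite mem_filter => /andP [hq _] -> /mapP [p].
    rewrite mem_filter => /andP [hp _] ->.
    have := Hx (inr (p, q)); rewrite HA coef_dot /= /cond hp hq /= => H.
    rewrite ler_ndivrMr // mulrAC ler_pdivrMr //.
    move: H hp hq; clearbody al A; move=> H hp hq; lra.
  have [s [Hl Hu]] := sep_exists Hsep.
  apply: Hinf; exists (ext x' s) => k.
  rewrite sum_last ext_max.
  have -> : \sum_(j < d) a k (lift ord_max j) * ext x' s (lift ord_max j) = A k.
    by apply: eq_bigr => j _; rewrite ext_lift.
  rewrite -/(al k).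
  case: (ltgtP (al k) 0) => hk.
  - have hm : (b k - A k) / al k \in ls.
      by apply/mapP; exists k; rewrite // mem_filter hk mem_enum.
    have := Hl _ hm; rewrite ler_ndivrMr // => h.
    move: h hk; clearbody al A; move=> h hk; lra.
  - have hm : (b k - A k) / al k \in us.
      by apply/mapP; exists k; rewrite // mem_filter hk mem_enum.
    have := Hu _ hm; rewrite ler_pdivlMr // => h.
    move: h hk; clearbody al A; move=> h hk; lra.
  - have := Hx (inl k); rewrite HA coef_dot /= hk eqxx.
    by rewrite mul0r addr0.
have [l' [Hl0 [Hla Hlb]]] := IH _ a' b' new_inf.
exists (fun k => \sum_k' l' k' * coef k' k).
have swap : forall F : K -> R, \sum_k (\sum_k' l' k' * coef k' k) * F k
    = \sum_k' l' k' * \sum_k coef k' k * F k.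
  move=> F; under eq_bigr => k _ do rewrite mulr_suml.
  rewrite exchange_big; apply: eq_bigr => k' _; rewrite mulr_sumr.
  by apply: eq_bigr => k _; rewrite mulrA.
split; first by move=> k; apply: sumr_ge0 => k' _; apply: mulr_ge0.
split.
  move=> j; rewrite swap; case: (unliftP ord_max j) => [j'|] ->.
    exact: (Hla j').
  by rewrite big1 // => k' _; rewrite coef_al mulr0.
rewrite swap; apply: le_lt_trans Hlb; apply: ler_sum => k' _; exact: ler_wpM2l.
Qed.

Lemma farkas (V K : finType) (a : K -> V -> R) (b : K -> R) :
  ~ (exists x : V -> R, forall k, \sum_v a k v * x v <= b k) ->
  exists l : K -> R, (forall k, 0 <= l k) /\
    (forall v, \sum_k l k * a k v = 0) /\ \sum_k l k * b k < 0.
Proof.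
move=> Hinf.
have Hinf' : ~ (exists x : 'I_#|V| -> R,
    forall k, \sum_j a k (enum_val j) * x j <= b k).
  case=> x Hx; apply: Hinf; exists (fun v => x (enum_rank v)) => k.
  rewrite (reindex (@enum_val V predT)) /=.
    by under eq_bigr => j _ do rewrite enum_valK.
  by apply: onW_bij; exact: enum_val_bij.
have [l [H1 [H2 H3]]] := farkas_ord Hinf'.
exists l; split => //; split => // v.
by have := H2 (enum_rank v); rewrite enum_rankK.
Qed.

End Farkas.

Section Trop2.
Variable R : realType.

Lemma bigmax_ge (I : eqType) (r : seq I) (F : I -> R) (idx : R) x :
  x \in r -> F x <= \big[Num.max/idx]_(i <- r) F i.
Proof.
elim: r => // y r IH; rewrite inE big_cons => /orP [/eqP ->| /IH h].
  by rewrite le_max lexx.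
by rewrite le_max h orbT.
Qed.

Lemma bigmin_le (I : eqType) (r : seq I) (F : I -> R) (idx : R) x :
  x \in r -> \big[Num.min/idx]_(i <- r) F i <= F x.
Proof.
elim: r => // y r IH; rewrite inE big_cons => /orP [/eqP ->| /IH h].
  by rewrite ge_min lexx.
by rewrite ge_min h orbT.
Qed.

Lemma vmax_ge n (f : 'I_n -> R) j : f j <= vmax f.
Proof. by rewrite /vmax; apply: bigmax_ge; rewrite mem_index_enum. Qed.

Lemma vmin_le n (f : 'I_n -> R) j : vmin f <= f j.
Proof. by rewrite /vmin; apply: bigmin_le; rewrite mem_index_enum. Qed.

Lemma head_map_in n (f : 'I_n -> R) (j0 : 'I_n) :
  exists j, head 0 (map f (enum 'I_n)) = f j.
Proof.
case E: (enum 'I_n) => [|e s]; last by exists e.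
by have := mem_enum 'I_n j0; rewrite E.
Qed.

Lemma vmax_le n (f : 'I_n -> R) (a : R) (j0 : 'I_n) :
  (forall j, f j <= a) -> vmax f <= a.
Proof.
move=> H; rewrite /vmax; apply: (big_ind (fun y => y <= a)) => //.
  by have [j ->] := head_map_in f j0.
by move=> x y hx hy; rewrite ge_max hx hy.
Qed.

Lemma vmin_ge n (f : 'I_n -> R) (a : R) (j0 : 'I_n) :
  (forall j, a <= f j) -> a <= vmin f.
Proof.
move=> H; rewrite /vmin; apply: (big_ind (fun y => a <= y)) => //.
  by have [j ->] := head_map_in f j0.
by move=> x y hx hy; rewrite le_min hx hy.
Qed.

Lemma vmax_eq n (f : 'I_n -> R) (a : R) (j0 : 'I_n) :
  (forall j, f j <= a) -> f j0 = a -> vmax f = a.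
Proof.
move=> H h0; apply: le_anti; rewrite (vmax_le j0 H) /=.
by rewrite -h0 vmax_ge.
Qed.

Lemma vmin_eq n (f : 'I_n -> R) (a : R) (j0 : 'I_n) :
  (forall j, a <= f j) -> f j0 = a -> vmin f = a.
Proof.
move=> H h0; apply: le_anti; rewrite (vmin_ge j0 H) andbT.
by rewrite -h0 vmin_le.
Qed.

Definition Mx n m (v : 'I_m -> 'I_n -> R) (z : 'I_n -> R) i :=
  vmax (fun k => z k - v i k).

Lemma FWobj_H n m (v : 'I_m -> 'I_n -> R) w z :
  (forall i, inH (v i)) -> inH z ->
  FWobj v w z = \sum_i n%:R * w i * Mx v z i.
Proof.
move=> Hv Hz; rewrite /FWobj; apply: eq_bigr => i _.
rewrite /dDelta sumrB Hz (Hv i) subr0 addr0 mulrA [w i * _]mulrC.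
by [].
Qed.

Lemma key n m (v : 'I_m -> 'I_n -> R) w (y : 'I_m -> 'I_n -> R) mu z :
  (forall i, inH (v i)) -> inH z ->
  (forall i, \sum_j y i j = n%:R * w i) -> (forall j, \sum_i y i j = mu) ->
  FWobj v w z = \sum_i \sum_j y i j * (Mx v z i - (z j - v i j))
                - \sum_i \sum_j y i j * v i j.
Proof.
move=> Hv Hz Hr Hc; rewrite FWobj_H // -sumrB.
have E : forall i, \sum_j y i j * (Mx v z i - (z j - v i j)) - \sum_j y i j * v i j
   = n%:R * w i * Mx v z i - \sum_j y i j * z j.
  move=> i; rewrite -sumrB.
  rewrite (eq_bigr (fun j => Mx v z i * y i j - y i j * z j)); last first.
    by move=> j _; ring.
  by rewrite sumrB -mulr_sumr Hr mulrC.
under [RHS]eq_bigr => i _ do rewrite E.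
rewrite sumrB.
have -> : \sum_i \sum_j y i j * z j = 0.
  rewrite exchange_big /=.
  under eq_bigr => j _ do rewrite -mulr_suml Hc.
  by rewrite -mulr_sumr Hz mulr0.
by rewrite subr0.
Qed.

Definition Tz n m (v : 'I_m -> 'I_n -> R) (y : 'I_m -> 'I_n -> R) z :=
  \sum_i \sum_j y i j * (Mx v z i - (z j - v i j)).

Lemma Tz_ge0 n m (v : 'I_m -> 'I_n -> R) y z :
  (forall i j, 0 <= y i j) -> 0 <= Tz v y z.
Proof.
move=> Hy; apply: sumr_ge0 => i _; apply: sumr_ge0 => j _.
by apply: mulr_ge0 => //; rewrite subr_ge0 /Mx (vmax_ge (fun k => z k - v i k)).
Qed.

Lemma Tz_eq0 n m (v : 'I_m -> 'I_n -> R) y z :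
  (forall i j, 0 <= y i j) ->
  (Tz v y z = 0 <-> forall i j, 0 < y i j -> z j - v i j = Mx v z i).
Proof.
move=> Hy.
have Hge : forall i j, 0 <= y i j * (Mx v z i - (z j - v i j)).
  by move=> i j; apply: mulr_ge0 => //; rewrite subr_ge0 /Mx (vmax_ge (fun k => z k - v i k)).
split.
  move=> H0 i j hy.
  have Hi : \sum_j y i j * (Mx v z i - (z j - v i j)) = 0.
    apply: (psumr_eq0P _ H0) => // i' _.
    by apply: sumr_ge0 => j' _; apply: Hge.
  have := (psumr_eq0P (fun j _ => Hge i j) Hi) j isT.
  move/eqP; rewrite mulf_eq0 (gt_eqF hy) /= subr_eq0 => /eqP ->. by [].
move=> H; rewrite /Tz big1 // => i _; rewrite big1 // => j _.
have := Hy i j; rewrite le_eqVlt => /orP [/eqP <-| hy]; first by rewrite mul0r.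
by rewrite (H i j hy) subrr mulr0.
Qed.

Lemma FW_char n m (v : 'I_m -> 'I_n -> R) w (y : 'I_m -> 'I_n -> R) mu (S : 'I_m -> {set 'I_n}) :
  (forall i, inH (v i)) -> (forall i j, 0 <= y i j) ->
  (forall i, \sum_j y i j = n%:R * w i) -> (forall j, \sum_i y i j = mu) ->
  (forall i j, (j \in S i) = (0 < y i j)) ->
  (exists x0, inH x0 /\ FWobj v w x0 <= - \sum_i \sum_j y i j * v i j) ->
  forall z, FW v w z <-> Ccell v S z.
Proof.
move=> Hv Hy Hr Hc HS [x0 [Hx0 Hle]] z.
have Ek : forall u, inH u -> FWobj v w u = Tz v y u - \sum_i \sum_j y i j * v i j.
  by move=> u hu; apply: (key _ _ Hr Hc).
split.
- move=> [Hz Hmin]; split=> // i j; rewrite HS => hy.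
  have h1 := Hmin x0 Hx0; rewrite (Ek z Hz) in h1.
  have h0 : Tz v y z = 0.
    apply: le_anti; rewrite Tz_ge0 // andbT.
    move: h1 Hle; lra.
  exact: ((Tz_eq0 v z Hy).1 h0 i j hy).
- move=> [Hz Hc']; split=> // u Hu.
  have h0 : Tz v y z = 0.
    by apply/(Tz_eq0 _ _ Hy) => i j hy; apply: Hc'; rewrite HS.
  rewrite (Ek z Hz) (Ek u Hu) h0; have := Tz_ge0 v u Hy; lra.
Qed.

Lemma sum_pos (I : finType) (F : I -> R) i0 :
  (forall i, 0 <= F i) -> 0 < F i0 -> 0 < \sum_i F i.
Proof.
move=> H h0; rewrite (bigD1 i0) //=.
have : 0 <= \sum_(i | i != i0) F i by apply: sumr_ge0 => i _.
lra.
Qed.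

Lemma part2 n m (v : 'I_m -> 'I_n -> R) (S : 'I_m -> {set 'I_n}) :
  (2 <= n)%N -> (forall i, inH (v i)) -> is_bounded_cell v S ->
  exists w : 'I_m -> R, (forall i, 0 < w i) /\
       (forall x, FW v w x <-> Ccell v S x).
Proof.
move=> hn Hv [HS [[x0 Hx0] [B HB]]].
have n0 : (0 < n)%N by apply: leq_trans hn.
have cover : forall j, exists i, j \in S i.
  move=> j0; case: (boolP [exists i, j0 \in S i]) => [/existsP [i hi]|/existsPn Hn].
    by exists i.
  exfalso.
  pose s := `|x0 j0| + `|B| + 1.
  have s0 : 0 <= s by rewrite /s; have := normr_ge0 (x0 j0); have := normr_ge0 B; lra.
  pose xs := fun j => x0 j + s - (if j == j0 then n%:R * s else 0).
  case: Hx0 => Hx0H Hx0c.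
  have Hxs : Ccell v S xs.
    split.
      rewrite /inH /xs sumrB big_split /= Hx0H sumr_const card_ord.
      rewrite (bigD1 j0) //= eqxx big1 => [|j /negbTE -> //].
      by rewrite -mulr_natl add0r addr0; ring.
    move=> i j hj.
    have hjj : (j == j0) = false.
      by apply/negbTE; apply: contraNneq (Hn i) => <-.
    symmetry; apply: (vmax_eq (j0 := j)) => // k.
    rewrite /xs hjj subr0.
    have h1 := Hx0c i j hj.
    have h2 := vmax_ge (fun k => x0 k - v i k) k.
    have h3 : 0 <= (if k == j0 then n%:R * s else 0).
      by case: ifP => // _; apply: mulr_ge0.
    rewrite /= -h1 in h2; lra.
  have := HB xs Hxs j0; rewrite /xs eqxx.
  have hn2 : 2%:R * s <= n%:R * s by apply: ler_wpM2r => //; rewrite ler_nat.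
  have := ler_norm (x0 j0); have := ler_norm B.
  rewrite ler_norml; rewrite /s; move: hn2; rewrite /s; lra.
pose c j : R := (#|[set i | j \in S i]|)%:R.
have c0 : forall j, 0 < c j.
  move=> j; have [i hi] := cover j; rewrite /c ltr0n card_gt0.
  by apply/set0Pn; exists i; rewrite inE.
pose y i j : R := if j \in S i then (c j)^-1 else 0.
pose w i := (\sum_j y i j) / n%:R.
have Hy : forall i j, 0 <= y i j.
  by move=> i j; rewrite /y; case: ifP => // _; rewrite invr_ge0 ltW.
have HS' : forall i j, (j \in S i) = (0 < y i j).
  move=> i j; rewrite /y; case: ifP => [_|_]; first by rewrite invr_gt0 c0.
  by rewrite ltxx.
have nR : (n%:R : R) != 0 by rewrite pnatr_eq0 -lt0n.
have Hr : forall i, \sum_j y i j = n%:R * w i.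
  by move=> i; rewrite /w mulrC divfK.
have Hc : forall j, \sum_i y i j = 1.
  move=> j; rewrite /y -big_mkcond /= sumr_const.
  have -> : #|[pred i | j \in S i]| = #|[set i | j \in S i]|.
    by apply: eq_card => i; rewrite !inE.
  have := c0 j; rewrite /c => cj.
  move: cj; set C := #|_| => cj.
  by rewrite -(mulr_natr ((C%:R)^-1) C) mulVf // gt_eqF.
exists w; split.
  move=> i; rewrite /w; apply: divr_gt0; last by rewrite ltr0n.
  have /set0Pn [j hj] := HS i.
  by apply: (sum_pos (i0 := j)) => //; rewrite -HS'.
apply: (FW_char Hv Hy Hr Hc HS').
exists x0; split; first by case: Hx0.
rewrite (key (z:=x0) Hv _ Hr Hc); last by case: Hx0.
suff h : Tz v y x0 = 0 by rewrite /Tz in h; rewrite h add0r.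
apply/(Tz_eq0 _ _ Hy) => i j hy.
by case: Hx0 => _ H; apply: H; rewrite HS'.
Qed.

End Trop2.

Section LP.
Variable R : realType.

Notation VT n m := (('I_n + 'I_m) + ('I_m * 'I_n))%type.
Notation KT n m := ((('I_m * 'I_n) + bool) +
   (('I_m * 'I_n) + (('I_m * bool) + (('I_n * bool) + unit))))%type.

Definition lpA n m (v : 'I_m -> 'I_n -> R) (w : 'I_m -> R) (k : KT n m) (u : VT n m) : R :=
  match k, u with
  | inl (inl (i, j)), inl (inl j') => (j' == j)%:R
  | inl (inl (i, j)), inl (inr i') => - (i' == i)%:R
  | inl (inr s), inl (inl _) => if s then 1 else -1
  | inr (inl (i, j)), inr (i', j') => - ((i' == i)%:R * (j' == j)%:R)
  | inr (inr (inl (i, s))), inr (i', _) => (if s then 1 else -1) * (i' == i)%:R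
  | inr (inr (inr (inl (j, s)))), inr (_, j') => (if s then 1 else -1) * (j' == j)%:R
  | inr (inr (inr (inr _))), inl (inr i) => n%:R * w i
  | inr (inr (inr (inr _))), inr (i, j) => v i j
  | _, _ => 0
  end.

Definition lpB n m (v : 'I_m -> 'I_n -> R) (w : 'I_m -> R) (k : KT n m) : R :=
  match k with
  | inl (inl (i, j)) => v i j
  | inl (inr _) => 0
  | inr (inl _) => 0
  | inr (inr (inl (i, s))) => (if s then 1 else -1) * (n%:R * w i)
  | inr (inr (inr (inl (j, s)))) => (if s then 1 else -1) * \sum_i w i
  | inr (inr (inr (inr _))) => 0
  end.

Lemma sumV n m (F : VT n m -> R) :
  \sum_u F u = \sum_j F (inl (inl j)) + \sum_i F (inl (inr i))
               + \sum_i \sum_j F (inr (i, j)).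
Proof.
rewrite !big_sumType /= pair_big /=; congr (_ + _).
by apply: eq_bigr => -[i j].
Qed.

Lemma sumK n m (F : KT n m -> R) :
  \sum_k F k = \sum_i \sum_j F (inl (inl (i, j))) + (F (inl (inr true)) + F (inl (inr false)))
   + (\sum_i \sum_j F (inr (inl (i, j)))
   + (\sum_i (F (inr (inr (inl (i, true)))) + F (inr (inr (inl (i, false)))))
   + (\sum_j (F (inr (inr (inr (inl (j, true))))) + F (inr (inr (inr (inl (j, false))))))
   + F (inr (inr (inr (inr tt))))))).
Proof.
have E1 : forall (G : 'I_m * 'I_n -> R), \sum_p G p = \sum_i \sum_j G (i, j).
  by move=> G; rewrite pair_big; apply: eq_bigr => -[].
have E2 : forall (I : finType) (G : I * bool -> R),
    \sum_p G p = \sum_i (G (i, true) + G (i, false)).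
  move=> I G; under [RHS]eq_bigr => i _ do rewrite -(big_bool _ (fun s => G (i, s))).
  by rewrite pair_big; apply: eq_bigr => -[].
have E3 : forall (G : unit -> R), \sum_p G p = G tt.
  by move=> G; rewrite (bigD1 tt) //= big1 ?addr0 // => -[].
by rewrite !big_sumType /= E1 E1 E2 E2 E3 big_bool.
Qed.

Lemma sum_indr (K : finType) (p : K) (F : K -> R) :
  \sum_k F k * (k == p)%:R = F p.
Proof. by under eq_bigr => k _ do rewrite mulrC; rewrite sum_ind. Qed.

Lemma sum_ind2 (I J : finType) (p : I) (q : J) (F : I -> J -> R) :
  \sum_i \sum_j (i == p)%:R * (j == q)%:R * F i j = F p q.
Proof.
under eq_bigr => i _ do (under eq_bigr => j _ do rewrite -mulrA; rewrite -mulr_sumr sum_ind).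
by rewrite sum_ind.
Qed.

Lemma sum0l (K : finType) (F : K -> R) : \sum_k 0 * F k = 0.
Proof. by rewrite big1 // => k _; rewrite mul0r. Qed.

Lemma sum00 (I J : finType) (F : I -> J -> R) : \sum_i \sum_j 0 * F i j = 0.
Proof. by rewrite big1 // => i _; rewrite sum0l. Qed.

Lemma sumNind (K : finType) (p : K) (F : K -> R) :
  \sum_k - (k == p)%:R * F k = - F p.
Proof. by under eq_bigr => k _ do rewrite mulNr; rewrite sumrN sum_ind. Qed.

Lemma sum_ind2N (I J : finType) (p : I) (q : J) (F : I -> J -> R) :
  \sum_i \sum_j - ((i == p)%:R * (j == q)%:R) * F i j = - F p q.
Proof.
rewrite -(sum_ind2 p q F) -sumrN; apply: eq_bigr => i _; rewrite -sumrN.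
by apply: eq_bigr => j _; rewrite mulNr.
Qed.

Lemma sum_indA (I J : finType) (c : R) (p : I) (F : I -> J -> R) :
  \sum_i \sum_j c * (i == p)%:R * F i j = c * \sum_j F p j.
Proof.
rewrite -(sum_ind p (fun i => c * \sum_j F i j)); apply: eq_bigr => i _.
rewrite !mulr_sumr; apply: eq_bigr => j _.
by rewrite [c * _]mulrC -mulrA.
Qed.

Lemma sum_indc (K : finType) (c : R) (p : K) (F : K -> R) :
  \sum_k c * (k == p)%:R * F k = c * F p.
Proof.
by rewrite -(sum_ind p (fun k => c * F k)); apply: eq_bigr => k _; rewrite [c * _]mulrC -mulrA.
Qed.

Lemma L0a (I J : finType) (F : I -> J -> R) : \sum_i \sum_j F i j * 0 = 0.
Proof. by rewrite big1 // => i _; rewrite big1 // => j _; rewrite mulr0. Qed.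

Lemma L0b (I : finType) (F G : I -> R) : \sum_i (F i * 0 + G i * 0) = 0.
Proof. by rewrite big1 // => i _; rewrite !mulr0 addr0. Qed.

Lemma sum_indr' (K : finType) (p : K) (F : K -> R) :
  \sum_k F k * (p == k)%:R = F p.
Proof. by under eq_bigr => k _ do rewrite eq_sym; rewrite sum_indr. Qed.

Lemma sumNind2 (I J : finType) (p : I) (F : I -> J -> R) :
  \sum_i \sum_j F i j * - (p == i)%:R = - \sum_j F p j.
Proof.
under eq_bigr => i _ do rewrite -mulr_suml mulrN.
by rewrite sumrN sum_indr'.
Qed.

Lemma sumNind22 (I J : finType) (p : I) (q : J) (F : I -> J -> R) :
  \sum_i \sum_j F i j * - ((p == i)%:R * (q == j)%:R) = - F p q.
Proof.
rewrite -(sum_ind2 p q F) -sumrN; apply: eq_bigr => i _; rewrite -sumrN.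
by apply: eq_bigr => j _; rewrite mulrN mulrC (eq_sym i) (eq_sym j).
Qed.

Lemma sumPM (K : finType) (p : K) (F G : K -> R) :
  \sum_k (F k * (1 * (p == k)%:R) + G k * (-1 * (p == k)%:R)) = F p - G p.
Proof.
under eq_bigr => k _ do rewrite mul1r mulN1r mulrN.
by rewrite big_split /= sumrN !sum_indr'.
Qed.

Lemma sumPM2 (K : finType) (F G c : K -> R) :
  \sum_k (F k * (1 * c k) + G k * (-1 * c k)) = \sum_k (F k - G k) * c k.
Proof. by apply: eq_bigr => k _; rewrite mul1r mulN1r mulrN mulrBl. Qed.

Lemma lp_exists n m (v : 'I_m -> 'I_n -> R) (w : 'I_m -> R) :
  (0 < n)%N -> (forall i, 0 < w i) ->
  exists x t y, inH x /\ (forall i j, x j - t i <= v i j) /\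
    (forall i j, 0 <= y i j) /\ (forall i, \sum_j y i j = n%:R * w i) /\
    (forall j, \sum_i y i j = \sum_i w i) /\
    \sum_i n%:R * w i * t i + \sum_i \sum_j y i j * v i j <= 0.
Proof.
move=> n0 Hw.
apply: NNPP => Hno.
have Hinf : ~ (exists z : VT n m -> R,
    forall k, \sum_u lpA v w k u * z u <= lpB v w k).
  case=> z Hz; apply: Hno.
  exists (fun j => z (inl (inl j))), (fun i => z (inl (inr i))), (fun i j => z (inr (i, j))).
  have h1 : forall i j, z (inl (inl j)) - z (inl (inr i)) <= v i j.
    move=> i j; have := Hz (inl (inl (i, j))); rewrite sumV /lpA /lpB /=.
    by rewrite sum_ind sumNind sum00 addr0.
  have h2 : forall s : bool, (if s then 1 else -1) * \sum_j z (inl (inl j)) <= 0.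
    move=> s; have := Hz (inl (inr s)); rewrite sumV /lpA /lpB /=.
    by rewrite sum0l sum00 !addr0 -mulr_sumr.
  have h3 : forall i j, - z (inr (i, j)) <= 0.
    move=> i j; have := Hz (inr (inl (i, j))); rewrite sumV /lpA /lpB /=.
    by rewrite !sum0l !add0r sum_ind2N.
  have h4 : forall i (s : bool), (if s then 1 else -1) * \sum_j z (inr (i, j)) <= (if s then 1 else -1) * (n%:R * w i).
    move=> i s; have := Hz (inr (inr (inl (i, s)))); rewrite sumV /lpA /lpB /=.
    by rewrite !sum0l !add0r sum_indA.
  have h5 : forall j (s : bool), (if s then 1 else -1) * \sum_i z (inr (i, j)) <= (if s then 1 else -1) * \sum_i w i.
    move=> j s; have := Hz (inr (inr (inr (inl (j, s))))); rewrite sumV /lpA /lpB /=.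
    rewrite !sum0l !add0r; under eq_bigr => i _ do rewrite sum_indc.
    by rewrite -mulr_sumr.
  have h6 : \sum_i n%:R * w i * z (inl (inr i)) + \sum_i \sum_j z (inr (i, j)) * v i j <= 0.
    have := Hz (inr (inr (inr (inr tt)))); rewrite sumV /lpA /lpB /=.
    rewrite sum0l add0r => h; apply: le_trans h; rewrite lerD2l le_eqVlt; apply/orP; left.
    by apply/eqP; apply: eq_bigr => i _; apply: eq_bigr => j _; rewrite mulrC.
  split.
    by rewrite /inH; have := h2 true; have := h2 false; rewrite mul1r mulN1r; lra.
  split; first exact: h1.
  split; first by move=> i j; have := h3 i j; rewrite oppr_le0.
  split.
    by move=> i; have := h4 i true; have := h4 i false; rewrite !mul1r !mulN1r; lra.
  split; last exact: h6.
  by move=> j; have := h5 j true; have := h5 j false; rewrite !mul1r !mulN1r; lra.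
have [l [Hl0 [Hla Hlb]]] := farkas Hinf.
pose al i j := l (inl (inl (i, j))).
have EX : forall j, \sum_i al i j + (l (inl (inr true)) - l (inl (inr false))) = 0.
  move=> j; have := Hla (inl (inl j)); rewrite sumK /lpA /=.
  rewrite L0a !L0b mulr0 !addr0 mulr1 mulrN1.
  by under eq_bigr => i _ do rewrite sum_indr'.
have ET : forall i, - \sum_j al i j + l (inr (inr (inr (inr tt)))) * (n%:R * w i) = 0.
  move=> i; have := Hla (inl (inr i)); rewrite sumK /lpA /=.
  by rewrite sumNind2 L0a !L0b !mulr0 !addr0 !add0r.
have EY : forall i j, - l (inr (inl (i, j))) + (l (inr (inr (inl (i, true)))) - l (inr (inr (inl (i, false)))))
   + (l (inr (inr (inr (inl (j, true))))) - l (inr (inr (inr (inl (j, false)))))) + l (inr (inr (inr (inr tt)))) * v i j = 0.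
  move=> i j; have := Hla (inr (i, j)); rewrite sumK /lpA /=.
  by rewrite sumNind22 L0a !sumPM !mulr0 !addr0 add0r !addrA.
have Eb := Hlb; rewrite sumK /lpB /= in Eb.
rewrite L0a !mulr0 !addr0 add0r !sumPM2 -mulr_suml in Eb.
move: EX ET EY Eb.
set be := l (inl (inr true)) - l (inl (inr false)).
set tau := l (inr (inr (inr (inr tt)))).
set W := \sum_i w i.
pose ga i j := l (inr (inl (i, j))).
pose de i := l (inr (inr (inl (i, true)))) - l (inr (inr (inl (i, false)))).
pose ep j := l (inr (inr (inr (inl (j, true))))) - l (inr (inr (inr (inl (j, false))))).
move=> EX ET EY Eb.
have EY' : forall i j, tau * v i j = ga i j - de i - ep j.
  by move=> i j; have := EY i j; rewrite /ga /de /ep; lra.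
have al0 : forall i j, 0 <= al i j by move=> i j; apply: Hl0.
have ga0 : forall i j, 0 <= ga i j by move=> i j; apply: Hl0.
set A := \sum_i \sum_j al i j * v i j in Eb.
set D := \sum_i de i * (n%:R * w i).
set E := \sum_j ep j.
have {}Eb : A + (D + E * W) < 0 by exact: Eb.
have nR : (n%:R : R) != 0 by rewrite pnatr_eq0 -lt0n.
have := Hl0 (inr (inr (inr (inr tt)))); rewrite -/tau le_eqVlt => /orP [/eqP t0 | tpos].
  have al_0 : forall i j, al i j = 0.
    move=> i j; have := ET i; rewrite -t0 mul0r addr0 => /eqP; rewrite oppr_eq0 => /eqP h.
    by apply: (psumr_eq0P _ h) => // j' _; apply: al0.
  have dege : forall i j, 0 <= de i + ep j.
    by move=> i j; have := EY' i j; have := ga0 i j; rewrite -t0 mul0r; lra.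
  have A0 : A = 0 by rewrite /A big1 // => i _; rewrite big1 // => j _; rewrite al_0 mul0r.
  have key2 : D + E * W = \sum_i \sum_j w i * (de i + ep j).
    transitivity (\sum_i (de i * (n%:R * w i) + w i * E)).
      by rewrite big_split /= -mulr_suml mulrC.
    apply: eq_bigr => i _; rewrite -mulr_sumr big_split /= sumr_const card_ord.
    by rewrite -/E -[de i *+ n]mulr_natl; ring.
  have ge0 : 0 <= \sum_i \sum_j w i * (de i + ep j).
    apply: sumr_ge0 => i _; apply: sumr_ge0 => j _; apply: mulr_ge0 => //.
    exact: ltW.
  lra.
have hb : n%:R * (be + tau * W) = 0.
  have s1 : \sum_j (\sum_i al i j + be) = 0 by rewrite big1.
  have s2 : \sum_i (- \sum_j al i j + tau * (n%:R * w i)) = 0 by rewrite big1.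
  rewrite big_split /= sumr_const card_ord in s1.
  rewrite big_split /= sumrN -mulr_sumr -mulr_sumr exchange_big /= in s2.
  move: s1 s2; rewrite -[be *+ n]mulr_natl -/W; lra.
have hbe : be = - (tau * W).
  by move/eqP: hb; rewrite mulf_eq0 (negbTE nR) /= => /eqP; lra.
have S1 : - (tau * D) + be * E <= tau * A.
  have E1 : tau * A = \sum_i \sum_j al i j * (tau * v i j).
    rewrite /A mulr_sumr; apply: eq_bigr => i _; rewrite mulr_sumr.
    by apply: eq_bigr => j _; rewrite mulrCA.
  have E2 : \sum_i \sum_j al i j * (- de i - ep j)
      = - \sum_i de i * (\sum_j al i j) - \sum_j ep j * \sum_i al i j.
    have -> : \sum_j ep j * \sum_i al i j = \sum_i \sum_j al i j * ep j.
      rewrite exchange_big; apply: eq_bigr => j _; rewrite mulr_sumr.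
      by apply: eq_bigr => i _; rewrite mulrC.
    rewrite -sumrN -sumrB; apply: eq_bigr => i _.
    rewrite mulr_sumr -sumrN -sumrB; apply: eq_bigr => j _; ring.
  have E3 : - \sum_i de i * (\sum_j al i j) - \sum_j ep j * \sum_i al i j
      = - (tau * D) + be * E.
    have -> : \sum_i de i * (\sum_j al i j) = tau * D.
      rewrite /D mulr_sumr; apply: eq_bigr => i _.
      have := ET i; move=> h; have -> : \sum_j al i j = tau * (n%:R * w i) by lra.
      by rewrite mulrCA.
    have -> : \sum_j ep j * \sum_i al i j = - (be * E).
      rewrite /E mulr_sumr -sumrN; apply: eq_bigr => j _.
      have := EX j; move=> h; have -> : \sum_i al i j = - be by lra.
      by rewrite mulrN mulrC.
    by rewrite opprK.
  rewrite E1 -E3 -E2; apply: ler_sum => i _; apply: ler_sum => j _.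
  apply: ler_wpM2l => //; rewrite EY'; have := ga0 i j; lra.
have Tb : tau * (A + (D + E * W)) < 0 by rewrite pmulr_rlt0.
rewrite hbe in S1.
move: Tb S1; rewrite !mulrDr; nra.
Qed.

End LP.

Section P1.
Variable R : realType.

Lemma Mx_ge0 n m (v : 'I_m -> 'I_n -> R) z i :
  (0 < n)%N -> inH z -> inH (v i) -> 0 <= Mx v z i.
Proof.
move=> n0 Hz Hvi.
have : \sum_j (z j - v i j) <= \sum_(j < n) Mx v z i.
  by apply: ler_sum => j _; rewrite /Mx (vmax_ge (fun k => z k - v i k)).
rewrite sumrB Hz Hvi subrr sumr_const card_ord -mulr_natl pmulr_rge0 //.
by rewrite ltr0n.
Qed.

Lemma bound_H n (z U : 'I_n -> R) :
  inH z -> (forall j, z j <= U j) -> forall j, `|z j| <= \sum_k `|U k|.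
Proof.
move=> Hz HU j.
have hUj : `|U j| <= \sum_k `|U k|.
  by rewrite (bigD1 j) //= lerDl sumr_ge0.
have hrest : \sum_(k | k != j) z k <= \sum_k `|U k|.
  apply: (@le_trans _ _ (\sum_(k | k != j) `|U k|)).
    by apply: ler_sum => k _; apply: le_trans (HU k) (ler_norm _).
  by rewrite [X in _ <= X](bigD1 j) //= lerDr.
have Ez : z j = - \sum_(k | k != j) z k.
  by move: Hz; rewrite /inH (bigD1 j) //= => h; lra.
rewrite ler_norml; have := HU j; have := ler_norm (U j); lra.
Qed.

Lemma pos_exists (I : finType) (F : I -> R) :
  (forall i, 0 <= F i) -> 0 < \sum_i F i -> exists i, 0 < F i.
Proof.
move=> H0 Hs; case: (boolP [exists i, 0 < F i]) => [/existsP [i hi]|/existsPn H].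
  by exists i.
have : \sum_i F i = 0.
  by apply: big1 => i _; apply: le_anti; rewrite H0 andbT leNgt H.
lra.
Qed.

Lemma part1 n m (v : 'I_m -> 'I_n -> R) (w : 'I_m -> R) :
  (2 <= n)%N -> (1 <= m)%N -> (forall i, inH (v i)) -> (forall i, 0 < w i) ->
     (forall x, FW v w x -> tconv v x) /\
     (exists S : 'I_m -> {set 'I_n},
        is_bounded_cell v S /\ (forall x, FW v w x <-> Ccell v S x)).
Proof.
move=> hn hm Hv Hw.
have n0 : (0 < n)%N by apply: leq_trans hn.
have [x [t [y [HxH [Hxt [Hy [Hr [Hc Hobj]]]]]]]] := lp_exists v n0 Hw.
pose S i := [set j | 0 < y i j].
have HS' : forall i j, (j \in S i) = (0 < y i j) by move=> i j; rewrite inE.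
pose j0 : 'I_n := Ordinal n0.
pose i0 : 'I_m := Ordinal hm.
have Hx : FWobj v w x <= - \sum_i \sum_j y i j * v i j.
  rewrite FWobj_H //.
  have : \sum_i n%:R * w i * Mx v x i <= \sum_i n%:R * w i * t i.
    apply: ler_sum => i _; apply: ler_wpM2l.
      by apply: mulr_ge0; [rewrite ler0n | apply: ltW].
    by apply: (vmax_le j0) => j; have := Hxt i j; lra.
  move: Hobj; lra.
have Hchar := FW_char Hv Hy Hr Hc HS' (ex_intro _ x (conj HxH Hx)).
have FWx : FW v w x.
  split=> // u Hu.
  rewrite (key (z:=u) Hv Hu Hr Hc); have := Tz_ge0 v u Hy; rewrite /Tz.
  move: Hx; lra.
have Wpos : 0 < \sum_i w i.
  by apply: (sum_pos (i0 := i0)) => // i; apply: ltW.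
have colpos : forall j, exists i, 0 < y i j.
  by move=> j; apply: pos_exists => //; rewrite Hc.
split.
  move=> z Hz; have [HzH Hzc] := (Hchar z).1 Hz.
  split=> //; exists (fun i => Mx v z i), 0 => j.
  rewrite add0r; symmetry.
  have [i hi] := colpos j.
  apply: (vmin_eq (j0 := i)).
    by move=> i'; have := vmax_ge (fun k => z k - v i' k) j; rewrite /Mx; lra.
  by have := Hzc i j; rewrite HS' => /(_ hi); rewrite /Mx; lra.
exists S; split; last exact: Hchar.
split.
  move=> i; apply/set0Pn.
  have [j hj] : exists j, 0 < y i j.
    apply: pos_exists => //; rewrite Hr; apply: mulr_gt0 => //; by rewrite ltr0n.
  by exists j; rewrite HS'.
split; first by exists x; exact: ((Hchar x).1 FWx).
exists (\sum_k `|v i0 k + FWobj v w x / (n%:R * w i0)|).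
move=> z Hz j.
have [HzH _] := Hz.
have [_ Hmin] := (Hchar z).2 Hz.
have h1 := Hmin x HxH.
have nw0 : 0 < n%:R * w i0 by apply: mulr_gt0 => //; rewrite ltr0n.
have h2 : n%:R * w i0 * Mx v z i0 <= FWobj v w z.
  rewrite FWobj_H // (bigD1 i0) //= lerDl; apply: sumr_ge0 => i _.
  apply: mulr_ge0; last exact: Mx_ge0.
  by apply: mulr_ge0; [rewrite ler0n | apply: ltW].
have h3 : Mx v z i0 <= FWobj v w x / (n%:R * w i0).
  by rewrite ler_pdivlMr // mulrC; apply: le_trans h2 h1.
apply: bound_H => // k.
have := vmax_ge (fun k => z k - v i0 k) k; rewrite /Mx in h3; lra.
Qed.

End P1.

Theorem theorem1p1 (R : realType) (n m : nat) (v : 'I_m -> 'I_n -> R) :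
  (2 <= n)%N -> (1 <= m)%N ->
  injective v -> (forall i, inH (v i)) ->
  (forall w : 'I_m -> R, (forall i, 0 < w i) ->
     (forall x, FW v w x -> tconv v x) /\
     (exists S : 'I_m -> {set 'I_n},
        is_bounded_cell v S /\ (forall x, FW v w x <-> Ccell v S x))) /\
  (forall S : 'I_m -> {set 'I_n}, is_bounded_cell v S ->
     exists w : 'I_m -> R, (forall i, 0 < w i) /\
       (forall x, FW v w x <-> Ccell v S x)).
Proof.
move=> hn hm _ Hv; split.
  by move=> w Hw; apply: part1.
by move=> S HS; apply: part2.
Qed.
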